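(* Let $d\ge2$ and $n\in\mathbb N_0$. Every $Z\in\mathcal V_n^d(\mathsf w_{-1,-1})$ satisfies $$\mathcal D_{-1}Z=-n(n+d-2)\,Z.$$ Moreover, $\mathcal V_n^d(\mathsf w_{-1,-1})=\mathcal H_n^{d,0}\oplus(1-t)\,\mathcal V_{n-1}^d(\mathsf w_{-1,1})$ (with the second summand $\{0\}$ when $n=0$).
   Context: Cone points $(x,t)=(t\xi,t)$, $\xi\in\mathbb S^{d-1}$. $\mathcal D_\gamma=t(1-t)\frac{\partial^2}{\partial t^2}+\big(d-1-(d+\gamma)t\big)\frac{\partial}{\partial t}+t^{-1}\Delta_0^{(\xi)}$, acting on functions of $(t,\xi)$, $t$-derivatives at fixed $\xi$, $\Delta_0^{(\xi)}$ the Laplace–Beltrami operator on $\mathbb S^{d-1}$. $\mathcal H_m^{d,0}$: homogeneous harmonic polynomials of degree $m$ on $\mathbb R^d$, with basis $\{Y_\ell^m\}$ orthonormal on $\mathbb S^{d-1}$ for normalized surface measure. Jacobi polynomials for real parameters: $P_n^{(\alpha,\beta)}(u)=\sum_{k=0}^n\frac{(\alpha+k+1)_{n-k}(-n)_k(n+\alpha+\beta+1)_k}{n!\,k!}(\frac{1-u}{2})^k$; $A_n^{(\alpha,\beta)}=2^n/(n+\alpha+\beta+1)_n$; $\widehat P_n^{(\alpha,\beta)}=A_n^{(\alpha,\beta)}P_n^{(\alpha,\beta)}$. $J_n^{(\alpha,-1)}(u)=1$ for $n=0$ and $J_n^{(\alpha,-1)}(u)=\int_{-1}^u\widehat P_{n-1}^{(\alpha+1,0)}(w)\mathrm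 dw$ for $n\ge1$. $\mathcal V_n^d(\mathsf w_{-1,-1})$ is the span of $\{J_{n-m}^{(2m+d-2,-1)}(1-2t)Y_\ell^m(x):0\le m\le n,\ \ell\}$ (the Sobolev orthogonal polynomials of degree $n$ for $\beta=-1$, $s=1$), and $\mathcal V_k^d(\mathsf w_{-1,1})$ is the span of $\{P_{k-m}^{(2m+d-2,1)}(1-2t)Y_\ell^m(x):0\le m\le k,\ \ell\}$ (the orthogonal polynomials of degree $k$ on the cone for the weight $t^{-1}(1-t)$); all as functions on the cone. *)

(* Defs.v *)
From HB Require Import structures.
From mathcomp Require Import all_boot all_order all_algebra.
From mathcomp Require Import all_classical all_reals all_analysis.
Set Implicit Arguments. Unset Strict Implicit. Unset Printing Implicit Defensive.
Import Order.TTheory GRing.Theory Num.Theory numFieldNormedType.Exports.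
Local Open Scope classical_set_scope.
Local Open Scope ring_scope.

Section Defs.
Variable R : realType.

Definition poch (a : R) (k : nat) : R := \prod_(i < k) (a + i%:R).

Definition jacobiP (al be : R) (n : nat) (u : R) : R :=
  \sum_(k < n.+1)
    poch (al + k%:R + 1) (n - k) * poch (- n%:R) k * poch (n%:R + al + be + 1) k
    / (n`! * k`!)%:R * ((1 - u) / 2) ^+ k.

Definition jacobiA (al be : R) (n : nat) : R := 2 ^+ n / poch (n%:R + al + be + 1) n.

Definition jacobiPhat (al be : R) (n : nat) (u : R) : R :=
  jacobiA al be n * jacobiP al be n u.

Definition oint (a b : R) (f : R -> R) : R :=
  if a <= b then (\int[lebesgue_measure]_(w in `[a, b]) f w)
  else - (\int[lebesgue_measure]_(w in `[b, a]) f w).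

Definition jacobiJ (al : R) (n : nat) (u : R) : R :=
  match n with
  | 0 => 1
  | n'.+1 => oint (-1) u (jacobiPhat (al + 1) 0 n')
  end.

Variable d : nat.

Definition sqnorm (x : 'rV[R]_d) : R := \sum_(i < d) x ord0 i ^+ 2.
Definition enorm (x : 'rV[R]_d) : R := Num.sqrt (sqnorm x).
Definition on_sphere (xi : 'rV[R]_d) : Prop := sqnorm xi = 1.

Definition evec (i : 'I_d) : 'rV[R]_d := delta_mx ord0 i.

Definition laplacian (f : 'rV[R]_d -> R) (x : 'rV[R]_d) : R :=
  \sum_(i < d) derive (fun y => derive f y (evec i)) x (evec i).

(* Laplace--Beltrami operator on S^{d-1}: Laplacian of the 0-homogeneous
   extension x |-> g (x / |x|), evaluated on the sphere *)
Definition laplaceBeltrami (g : 'rV[R]_d -> R) (xi : 'rV[R]_d) : R :=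
  laplacian (fun x => g ((enorm x)^-1 *: x)) xi.

Definition monomial m (a : {ffun 'I_d -> 'I_m.+1}) (x : 'rV[R]_d) : R :=
  \prod_(i < d) x ord0 i ^+ a i.

Definition homog_poly (m : nat) (Y : 'rV[R]_d -> R) : Prop :=
  exists c : {ffun 'I_d -> 'I_m.+1} -> R,
    forall x, Y x = \sum_(a : {ffun 'I_d -> 'I_m.+1} | (\sum_(i < d) (a i : nat))%N == m)
                      c a * monomial a x.

Definition harmH (m : nat) : set ('rV[R]_d -> R) :=
  [set Y | homog_poly m Y /\ forall x, laplacian Y x = 0].

(* a function on the cone is represented as Z : R -> 'rV_d -> R, Z t xi;
   only its values for 0 <= t <= 1, |xi| = 1 matter *)
Definition cone_eq (Z W : R -> 'rV[R]_d -> R) : Prop :=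
  forall t xi, 0 <= t <= 1 -> on_sphere xi -> Z t xi = W t xi.

Definition Dop (gam : R) (Z : R -> 'rV[R]_d -> R) (t : R) (xi : 'rV[R]_d) : R :=
  t * (1 - t) * derive1 (derive1 (fun s => Z s xi)) t
  + (d%:R - 1 - (d%:R + gam) * t) * derive1 (fun s => Z s xi) t
  + t^-1 * laplaceBeltrami (Z t) xi.

Definition Vmm (n : nat) : set (R -> 'rV[R]_d -> R) :=
  [set Z | exists Y : nat -> 'rV[R]_d -> R,
     (forall m, (m <= n)%N -> harmH m (Y m)) /\
     cone_eq Z (fun t xi => \sum_(m < n.+1)
        jacobiJ ((2 * m + d)%:R - 2) (n - m) (1 - 2 * t) * Y m (t *: xi))].

Definition Vmp (k : nat) : set (R -> 'rV[R]_d -> R) :=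
  [set Z | exists Y : nat -> 'rV[R]_d -> R,
     (forall m, (m <= k)%N -> harmH m (Y m)) /\
     cone_eq Z (fun t xi => \sum_(m < k.+1)
        jacobiP ((2 * m + d)%:R - 2) 1 (k - m) (1 - 2 * t) * Y m (t *: xi))].

Definition Hcone (n : nat) : set (R -> 'rV[R]_d -> R) :=
  [set W | exists Y, harmH n Y /\ cone_eq W (fun t xi => Y (t *: xi))].

Definition second_summand (n : nat) : set (R -> 'rV[R]_d -> R) :=
  match n with
  | 0 => [set W | cone_eq W (fun _ _ => 0)]
  | n'.+1 => [set W | exists Q, Vmp n' Q /\ cone_eq W (fun t xi => (1 - t) * Q t xi)]
  end.

End Defs.

Arguments Vmm {R} d n _.
Arguments Vmp {R} d k _.
Arguments Hcone {R} d n _.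
Arguments second_summand {R} d n _.
Arguments harmH {R} d m _.
Arguments cone_eq {R} d Z W.
Arguments on_sphere {R} d xi.
Arguments Dop {R} d gam Z t xi.
Arguments laplaceBeltrami {R} d g xi.
Arguments laplacian {R} d f x.

(* Main.v *)
Require Import Defs.
From HB Require Import structures.
From mathcomp Require Import all_boot all_order all_algebra.
From mathcomp Require Import all_classical all_reals all_analysis.
From mathcomp Require Import ring lra zify.
Set Implicit Arguments. Unset Strict Implicit. Unset Printing Implicit Defensive.
Import Order.TTheory GRing.Theory Num.Theory numFieldNormedType.Exports.
Local Open Scope classical_set_scope.
Local Open Scope ring_scope.

Section J1.
Variable R : realType.
Implicit Types (a al be : R).

Definition jc al be (n j : nat) : R :=
  poch (al + j%:R + 1) (n - j) * poch (- n%:R) j * poch (n%:R + al + be + 1) j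
    / (n`! * j`!)%:R.

Definition polyJ al be n : {poly R} := \poly_(j < n.+1) jc al be n j.

Lemma jacobiP_horner al be n u : jacobiP al be n u = (polyJ al be n).[(1-u)/2].
Proof. by rewrite /jacobiP horner_poly. Qed.

Lemma poch0 a : poch a 0 = 1.
Proof. by rewrite /poch big_ord0. Qed.

Lemma pochS a n : poch a n.+1 = poch a n * (a + n%:R).
Proof. by rewrite /poch big_ord_recr. Qed.

Lemma pochSl a n : poch a n.+1 = a * poch (a + 1) n.
Proof.
rewrite /poch big_ord_recl addr0; congr (_ * _); apply: eq_bigr => i _.
by rewrite /= /bump /= add1n -natr1; ring.
Qed.

Lemma pochSlr a e : a * poch (a + 1) e = poch a e * (a + e%:R).
Proof. by rewrite -pochSl pochS. Qed.

Lemma poch_negn n j : (n < j)%N -> poch (- (n%:R : R)) j = 0.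
Proof.
elim: j => // j IH; rewrite ltnS leq_eqVlt => /orP[/eqP nj|nj].
  by rewrite pochS nj addNr mulr0.
by rewrite pochS IH // mul0r.
Qed.

Lemma jc_gt al be n j : (n < j)%N -> jc al be n j = 0.
Proof. by move=> /poch_negn h; rewrite /jc h mulr0 mul0r mul0r. Qed.

Lemma coef_polyJ al be n j : (polyJ al be n)`_j = jc al be n j.
Proof.
rewrite /polyJ coef_poly; case: ltnP => // h.
by rewrite jc_gt.
Qed.

Lemma fact_neq0 n : (n`!%:R : R) != 0.
Proof. by rewrite pnatr_eq0 -lt0n fact_gt0. Qed.

Lemma jc_rec al k j : (j.+1%:R * (j%:R + al + 1)) * jc al 1 k j.+1
   = (j%:R - k%:R) * (j%:R + k%:R + al + 2) * jc al 1 k j.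
Proof.
have [jk|kj] := ltnP j k; last first.
  rewrite (@jc_gt al 1 k j.+1) ?ltnS // mulr0.
  move: kj; rewrite leq_eqVlt => /orP[/eqP->|/jc_gt->]; last by rewrite mulr0.
  by rewrite subrr !mul0r.
have [e ->] : exists e, k = (j + e.+1)%N by exists (k - j.+1)%N; lia.
rewrite /jc addKn (_ : (j + e.+1 - j.+1 = e)%N); last by rewrite addnS subSS addKn.
rewrite (pochSl (al + j%:R + 1) e) (pochS (- _)) (pochS (_ + al + 1 + 1)) factS !natrM.
have -> : al + j.+1%:R + 1 = al + j%:R + 1 + 1 by rewrite -natr1; ring.
have h1 := fact_neq0 (j + e.+1); have h2 := fact_neq0 j.
field.
by rewrite h1 h2 nat1r pnatr_eq0.
Qed.

Lemma jc_rel al k j : (al + j%:R + 1) * jc (al + 1) 0 k j = (al + k%:R + 1) * jc al 1 k j.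
Proof.
have [jk|kj] := leqP j k; last by rewrite !jc_gt ?mulr0.
have [e ->] : exists e, k = (j + e)%N by exists (k - j)%N; lia.
rewrite /jc addKn.
have -> : al + 1 + j%:R + 1 = (al + j%:R + 1) + 1 by ring.
have -> : (j + e)%:R + (al + 1) + 0 + 1 = (j + e)%:R + al + 1 + 1 by ring.
rewrite !mulrA pochSlr natrD; ring.
Qed.

End J1.

Section J2.
Variable R : realType.
Implicit Types (al : R) (p r G : {poly R}).

Definition rP al k := polyJ al 1 k.
Definition pP al k := polyJ (al + 1) 0 k.
Definition hP al k : {poly R} := (1 - 'X) * rP al k.

Lemma deriv1P : (1 : {poly R})^`() = 0.
Proof. by rewrite -polyC1 derivC. Qed.

Lemma cXd1 p j : ('X * p^`())`_j = p`_j *+ j.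
Proof. by rewrite coefXM; case: j => [|j] //=; rewrite coef_deriv. Qed.

Lemma cXd2 p j : ('X * p^`()^`())`_j = p`_j.+1 *+ j.+1 *+ j.
Proof. by rewrite coefXM; case: j => [|j] /=; rewrite ?mulr0n // !coef_deriv. Qed.

Lemma cXXd2 p j : ('X * ('X * p^`()^`()))`_j = p`_j *+ j *+ j.-1.
Proof. by rewrite coefXM; case: j => [|j] /=; rewrite ?mulr0n // cXd2. Qed.

Lemma hP_deriv al k : 0 <= al -> (hP al k)^`() = - (k.+1%:R) *: pP al k.
Proof.
move=> al0; apply/polyP => j.
rewrite coef_deriv coefZ /hP mulrBl mul1r coefB coefXM /= /rP /pP !coef_polyJ.
have hj : al + j%:R + 1 != 0.
  have hj0 : (0:R) <= j%:R by [].
  by apply/lt0r_neq0; lra.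
apply: (mulfI hj).
have E1 := jc_rec al k j; have E2 := jc_rel al k j.
apply/eqP; rewrite -subr_eq0; apply/eqP.
set r1 := jc al 1 k j.+1 in E1 *; set r0 := jc al 1 k j in E1 E2 *.
set p0 := jc (al+1) 0 k j in E2 *.
clearbody r1 r0 p0.
transitivity ((j.+1%:R * (j%:R + al + 1) * r1 - (j%:R - k%:R) * (j%:R + k%:R + al + 2) * r0)
    + k.+1%:R * ((al + j%:R + 1) * p0 - (al + k%:R + 1) * r0)).
  by ring.
by rewrite E1 E2 !subrr mulr0 addr0.
Qed.

Lemma Psi_zero al k :
  let r := rP al k in
  'X * r^`()^`() - 'X * ('X * r^`()^`()) + (al + 1) *: r^`() - (al + 3) *: ('X * r^`())
   + (k%:R * (k%:R + al + 2)) *: r = 0.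
Proof.
move=> r; apply/polyP => j.
rewrite !(coefD, coefN, coefZ, cXd2, cXXd2, cXd1, coef_deriv, coef0) /r /rP !coef_polyJ.
have E1 := jc_rec al k j.
set r1 := jc al 1 k j.+1 in E1 *; set r0 := jc al 1 k j in E1 *.
clearbody r1 r0.
transitivity (j.+1%:R * (j%:R + al + 1) * r1 - (j%:R - k%:R) * (j%:R + k%:R + al + 2) * r0); last by rewrite E1 subrr.
by clear E1; case: j => [|j] /=; ring.
Qed.

Definition PhiP al (K : R) G : {poly R} :=
  'X * (1 - 'X) * G^`()^`() + (al + 1) *: ((1 - 'X) * G^`()) + (K * (K + al)) *: G.

Lemma Phi_hP al k : PhiP al (k.+1%:R) (hP al k) = 0.
Proof.
have := Psi_zero al k; rewrite /PhiP /hP /= => H.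
rewrite !poly.derivE.
set r := rP al k in H *.
transitivity ((1 - 'X) * ('X * r^`()^`() - 'X * ('X * r^`()^`()) + (al + 1) *: r^`() - (al + 3) *: ('X * r^`())
   + (k%:R * (k%:R + al + 2)) *: r)); last by rewrite H mulr0.
clearbody r; clear H.
rewrite -!mul_polyC; ring.
Qed.


Definition EP (dd nn : R) (P : {poly R}) : {poly R} :=
  'X * (1 - 'X) * P^`()^`() + (dd - 1) *: ((1 - 'X) * P^`()) + nn *: P.

Lemma EP_term (dd : R) (m K : nat) G :
  'X * EP dd ((m%:R + K%:R) * (m%:R + K%:R + dd - 2)) ('X^m * G)
   - (m%:R * (m%:R + dd - 2)) *: ('X^m * G)
  = 'X^(m.+1) * PhiP (2 * m%:R + dd - 2) K%:R G.
Proof.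
rewrite /EP /PhiP !poly.derivE -!mul_polyC.
case: m => [|[|m]] /=; rewrite ?mulr0n ?expr0 ?expr1 ?exprS; ring.
Qed.

End J2.

Section J3.
Variable R : realType.
Implicit Types (al : R).

Definition cJ al k : R := 2 * jacobiA (al + 1) 0 k / k.+1%:R.

Lemma jacobiJ_hP al k t : 0 <= al -> 0 <= t <= 1 ->
  jacobiJ al k.+1 (1 - 2 * t) = cJ al k * (hP al k).[t].
Proof.
move=> al0 /andP[t0 t1].
pose qq : {poly R} := 2^-1 *: (1 - 'X).
have hq x : qq.[x] = (1 - x) / 2.
  by rewrite /qq hornerZ hornerD hornerN hornerX hornerC mulrC.
pose A := jacobiA (al + 1) 0 k.
pose Fp := cJ al k *: (hP al k \Po qq).
pose fp := A *: (pP al k \Po qq).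
have ef : jacobiPhat (al + 1) 0 k = horner fp.
  by apply/funext => w; rewrite /jacobiPhat jacobiP_horner /fp hornerZ horner_comp hq.
have dF : horner Fp^`() = horner fp.
  apply/funext => x; rewrite /Fp /fp derivZ deriv_comp hP_deriv //.
  rewrite /qq derivZ derivB deriv1P derivX !hornerZ hornerM horner_comp hornerZ.
  rewrite hornerD hornerN hornerC /cJ /A.
  have hk : (k.+1%:R : R) != 0 by rewrite pnatr_eq0.
  by rewrite horner_comp hornerZ -polyC1 hornerC; field; rewrite nat1r.
rewrite /jacobiJ /oint ifT; last by lra.
rewrite ef.
have hF x : (horner Fp) x = cJ al k * (hP al k).[(1 - x) / 2].
  by rewrite /Fp hornerZ horner_comp hq.
have hP1 : (hP al k).[1] = 0 by rewrite /hP hornerM hornerD hornerN hornerX hornerC subrr mul0r.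
have [->|tlt1] := eqVneq t 1.
  have -> : 1 - 2 * 1 = -1 :> R by ring.
  by rewrite set_itv1 Rintegral_set1 hP1 mulr0.
have ab : -1 < 1 - 2 * t by rewrite lt_neqAle eq_sym; apply/andP; split; [apply/eqP => h; move: tlt1; rewrite (_ : t = 1) //; lra | lra].
rewrite /Rintegral (@continuous_FTC2 _ (horner fp) (horner Fp) _ _ ab).
- rewrite -EFinB /= !hF.
  have -> : (1 - (1 - 2 * t)) / 2 = t by field.
  have -> : (1 - -1) / 2 = 1 :> R by field.
  by rewrite hP1 mulr0 subr0.
- exact/continuous_subspaceT/continuous_horner.
- split.
  + by move=> x _; exact: derivable_horner.
  + exact/cvg_at_right_filter/continuous_horner.
  + exact/cvg_at_left_filter/continuous_horner.
- by move=> x _; rewrite -derivE dF.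
Qed.

End J3.

Section A1.
Variable R : realType.

Lemma near_lt (a e : R) : 0 < e -> \forall r \near a, `|r - a| < e.
Proof.
move=> e0; apply/nbhs_ballP; exists e => // r /=.
by rewrite /ball /= distrC.
Qed.

Lemma derive1_near (f g : R -> R) a e : 0 < e ->
  (forall r, `|r - a| < e -> f r = g r) -> derive1 f a = derive1 g a.
Proof.
move=> e0 H; rewrite !derive1E; apply: near_eq_derive.
by apply: filterS (near_lt a e0) => r /H.
Qed.

Lemma derive2_near (f g : R -> R) a e : 0 < e ->
  (forall r, `|r - a| < e -> f r = g r) ->
  derive1 (derive1 f) a = derive1 (derive1 g) a.
Proof.
move=> e0 H; apply: (derive1_near e0) => r hr.
apply: (@derive1_near _ _ _ (e - `|r - a|)); first by rewrite subr_gt0.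
move=> s hs; apply: H.
rewrite (_ : s - a = (s - r) + (r - a)); last by ring.
apply: (le_lt_trans (ler_normD _ _)); rewrite -ltrBrDr //.
Qed.

Variable d : nat.
Implicit Types (f : 'rV[R]_d -> R) (a v : 'rV[R]_d).

Lemma derive_dir f a v h :
  derive f (h *: v + a) v = derive1 (fun r => f (r *: v + a)) h.
Proof.
rewrite /derive /derive1; congr (lim (_ @ 0^')); apply/funext => k /=.
by rewrite scalerDl addrA.
Qed.

Lemma derive2_dir f a v :
  derive (fun y => derive f y v) a v = derive1 (derive1 (fun r => f (r *: v + a))) 0.
Proof.
rewrite [LHS]/derive /derive1; congr (lim (_ @ 0^')); apply/funext => k /=.
rewrite derive_dir -[in X in _ - X](add0r a) -[in X in _ - X](scale0r v) derive_dir.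
by rewrite /derive1 !addr0.
Qed.

Lemma laplacian_dir f x :
  laplacian d f x = \sum_(i < d) derive1 (derive1 (fun r => f (r *: evec R i + x))) 0.
Proof. by apply: eq_bigr => i _; rewrite derive2_dir. Qed.

End A1.

Section A2.
Variable R : realType.
Variable d : nat.
Implicit Types (Y : 'rV[R]_d -> R) (x : 'rV[R]_d).

Lemma homogE m Y : homog_poly m Y -> forall (l : R) x, Y (l *: x) = l ^+ m * Y x.
Proof.
case=> c hY l x; rewrite !hY mulr_sumr; apply: eq_bigr => a /eqP ha.
rewrite /monomial.
under eq_bigr => j _ do rewrite mxE exprMn.
by rewrite big_split /= prodrXr ha mulrCA.
Qed.

Definition Pyi m (c : {ffun 'I_d -> 'I_m.+1} -> R) x (i : 'I_d) : {poly R} :=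
  \sum_(a : {ffun 'I_d -> 'I_m.+1} | (\sum_(j < d) (a j : nat))%N == m)
     c a *: ((\prod_(j < d | j != i) x ord0 j ^+ a j) *: ('X + (x ord0 i)%:P) ^+ a i).

Lemma evecE (i j : 'I_d) : evec R i ord0 j = (j == i)%:R.
Proof. by rewrite /evec mxE eqxx. Qed.

Lemma Pyi_eval m c Y x i :
  (forall x, Y x = \sum_(a : {ffun 'I_d -> 'I_m.+1} | (\sum_(i < d) (a i : nat))%N == m)
                      c a * monomial a x) ->
  forall r, Y (r *: evec R i + x) = (Pyi c x i).[r].
Proof.
move=> hY r; rewrite hY /Pyi horner_sum; apply: eq_bigr => a _.
rewrite !hornerZ horner_exp hornerD hornerX hornerC; congr (_ * _).
rewrite /monomial (bigD1 i) //= !mxE !eqxx /= mulr1 mulrC; congr (_ * _).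
apply: eq_bigr => j /negbTE hj; by rewrite !mxE /= hj mulr0 add0r.
Qed.

Lemma Pyi_deriv0 m c x i :
  (Pyi c x i)^`().[0] = \sum_(a : {ffun 'I_d -> 'I_m.+1} | (\sum_(j < d) (a j : nat))%N == m)
     c a * ((\prod_(j < d | j != i) x ord0 j ^+ a j) * ((a i)%:R * x ord0 i ^+ (a i).-1)).
Proof.
rewrite /Pyi raddf_sum horner_sum; apply: eq_bigr => a _.
rewrite /= !derivZ deriv_exp derivD derivX derivC addr0 mul1r !hornerZ hornerMn horner_exp.
by rewrite hornerD hornerX hornerC add0r -mulr_natl.
Qed.

Lemma euler m c Y x :
  (forall x, Y x = \sum_(a : {ffun 'I_d -> 'I_m.+1} | (\sum_(i < d) (a i : nat))%N == m)
                      c a * monomial a x) ->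
  \sum_(i < d) x ord0 i * (Pyi c x i)^`().[0] = m%:R * Y x.
Proof.
move=> hY; rewrite hY mulr_sumr.
under eq_bigr => i _ do rewrite Pyi_deriv0 mulr_sumr.
rewrite exchange_big /=; apply: eq_bigr => a /eqP ha.
have -> : \sum_(i < d) x ord0 i * (c a * ((\prod_(j < d | j != i) x ord0 j ^+ a j) *
            ((a i)%:R * x ord0 i ^+ (a i).-1)))
        = \sum_(i < d) c a * ((a i)%:R * monomial a x).
  apply: eq_bigr => i _; rewrite /monomial [\prod_(i0 < d) _](bigD1 i) //=.
  case: (a i : nat) => [|k] /=; first by rewrite !mul0r !mulr0.
  by rewrite exprS; ring.
by rewrite -mulr_sumr -mulr_suml -natr_sum ha; ring.
Qed.

Lemma laplacian_Pyi m c Y x :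
  (forall x, Y x = \sum_(a : {ffun 'I_d -> 'I_m.+1} | (\sum_(i < d) (a i : nat))%N == m)
                      c a * monomial a x) ->
  laplacian d Y x = \sum_(i < d) (Pyi c x i)^`()^`().[0].
Proof.
move=> hY; rewrite laplacian_dir; apply: eq_bigr => i _.
have -> : (fun r => Y (r *: evec R i + x)) = horner (Pyi c x i).
  by apply/funext => r; exact: Pyi_eval.
by rewrite -!derivE.
Qed.

Lemma harmH_scale m Y (k : R) : harmH d m Y -> harmH d m (fun x => k * Y x).
Proof.
case=> [[c hY] hL]; split.
  exists (fun a => k * c a) => x; rewrite hY mulr_sumr; apply: eq_bigr => a _; ring.
move=> x.
have hY' : forall x, k * Y x = \sum_(a : {ffun 'I_d -> 'I_m.+1} | (\sum_(i < d) (a i : nat))%N == m)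
                      (k * c a) * monomial a x.
  by move=> y; rewrite hY mulr_sumr; apply: eq_bigr => a _; ring.
transitivity (k * laplacian d Y x); last by rewrite hL mulr0.
rewrite (@laplacian_Pyi m (fun a => k * c a) (fun x => k * Y x) x hY') (@laplacian_Pyi m c Y x hY) mulr_sumr; apply: eq_bigr => i _.
have -> : Pyi (fun a => k * c a) x i = k *: Pyi c x i.
  by rewrite /Pyi scaler_sumr; apply: eq_bigr => a _; rewrite -scalerA.
by rewrite !derivZ hornerZ.
Qed.

End A2.

Section A3.
Variable R : realType.
Implicit Types (c r : R).

Lemma is_derive_fext (f g : R -> R) (x df : R) :
  (forall y, f y = g y) -> is_derive x (1:R) f df -> is_derive x (1:R) g df.
Proof. by move=> /funext <-. Qed.

Definition SqP c : {poly R} := 'X^2 + (2 * c) *: 'X + 1%:P.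

Lemma Sq_eval c r : (SqP c).[r] = r ^+ 2 + 2 * c * r + 1.
Proof. by rewrite /SqP !hornerD hornerZ hornerXn hornerX hornerC. Qed.

Lemma SqP_deriv c r : (SqP c)^`().[r] = 2 * r + 2 * c.
Proof.
rewrite /SqP !derivD derivZ derivXn derivX derivC addr0 hornerD hornerZ hornerMn.
by rewrite hornerX -polyC1 hornerC mulr1 mulr2n; ring.
Qed.

Lemma c_bounds c : c ^+ 2 <= 1 -> -1 <= c <= 1.
Proof. by move=> h; apply/andP; split; nra. Qed.

Lemma Sq_gt0 c r : c ^+ 2 <= 1 -> -1 < r < 1 -> 0 < (SqP c).[r].
Proof.
move=> /c_bounds /andP[c1 c2] /andP[r1 r2]; rewrite Sq_eval.
have [r0|r0] := leP 0 r; nra.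
Qed.

Definition psi c r := (Num.sqrt ((SqP c).[r]))^-1.
Definition wc c r := (c + r) / (SqP c).[r].

Lemma Sq0 c : (SqP c).[0] = 1.
Proof. by rewrite Sq_eval; ring. Qed.

Lemma psi0 c : psi c 0 = 1.
Proof. by rewrite /psi Sq0 sqrtr1 invr1. Qed.

Lemma wc0 c : wc c 0 = c.
Proof. by rewrite /wc Sq0 addr0 divr1. Qed.

Lemma psi_derive c r : c ^+ 2 <= 1 -> -1 < r < 1 ->
  is_derive r (1:R) (psi c) (- wc c r * psi c r).
Proof.
move=> hc hr; have S0 := Sq_gt0 hc hr.
have hs : Num.sqrt (SqP c).[r] != 0 by rewrite sqrtr_eq0 -ltNge.
have h1 := is_derive1_comp (is_derive1_sqrt S0) (is_derive_poly (SqP c) r).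
have h2 := is_deriveV (f := Num.sqrt \o horner (SqP c)) hs h1.
apply: is_derive_eq h2 _.
rewrite SqP_deriv /wc /psi.
set S := (SqP c).[r] in S0 hs *; set s := Num.sqrt S in hs *.
have E : S = s ^+ 2 by rewrite sqr_sqrtr // ltW.
rewrite E /GRing.scale /=; rewrite -/S -/s; by field.
Qed.

Lemma u_derive m c r : c ^+ 2 <= 1 -> -1 < r < 1 ->
  is_derive r (1:R) (fun y => psi c y ^+ m) (- (m%:R) * wc c r * psi c r ^+ m).
Proof.
move=> hc hr; have h := is_deriveX m (psi_derive hc hr).
apply: is_derive_fext (is_derive_eq h _) => [y|]; first by rewrite exprfctE.
case: m {h} => [|m] /=; first by rewrite /GRing.scale /=; ring.
by rewrite exprS; rewrite /GRing.scale /=; ring.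
Qed.

Lemma wc_derive0 c : c ^+ 2 <= 1 -> is_derive (0:R) (1:R) (wc c) (1 - 2 * c ^+ 2).
Proof.
move=> hc.
have S0 : (SqP c).[0] != 0 by rewrite Sq0 oner_neq0.
have hN := is_derive_poly ('X + c%:P) 0.
have hV := is_deriveV S0 (is_derive_poly (SqP c) 0).
have hM := is_deriveM hN hV.
apply: is_derive_fext (is_derive_eq hM _) => [y|].
  by change (('X + c%:P).[y] * (SqP c).[y]^-1 = (c + y) / (SqP c).[y]); rewrite hornerD hornerX hornerC addrC.
rewrite SqP_deriv Sq0 derivD derivX derivC addr0 -polyC1 hornerC hornerD hornerX hornerC.
by rewrite /GRing.scale /=; field.
Qed.

Definition F1 m c (P : {poly R}) r :=
  - (m%:R) * wc c r * psi c r ^+ m * P.[r] + psi c r ^+ m * P^`().[r].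

Lemma T1 m c (P : {poly R}) r : c ^+ 2 <= 1 -> -1 < r < 1 ->
  is_derive r (1:R) (fun y => psi c y ^+ m * P.[y]) (F1 m c P r).
Proof.
move=> hc hr.
have hM := is_deriveM (u_derive m hc hr) (is_derive_poly P r).
apply: is_derive_fext (is_derive_eq hM _) => [y //|].
by rewrite /F1 /GRing.scale /=; ring.
Qed.

Definition Vt m c (P : {poly R}) :=
  (m%:R * (m%:R + 2) * c ^+ 2 - m%:R) * P.[0] + 2 * (- (m%:R) * c) * P^`().[0] + P^`()^`().[0].

Lemma T2 m c (P : {poly R}) : c ^+ 2 <= 1 -> is_derive (0:R) (1:R) (F1 m c P) (Vt m c P).
Proof.
move=> hc.
have r0 : -1 < (0:R) < 1 by rewrite ltrN10 ltr01.
have hu := u_derive m hc r0.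
have hw := wc_derive0 hc.
have h1 := is_deriveM (is_deriveM hw hu) (is_derive_poly P 0).
have h2 := is_deriveM hu (is_derive_poly P^`() 0).
have h := is_deriveD (is_deriveZ (- (m%:R)) h1) h2.
apply: is_derive_fext (is_derive_eq h _) => [y|].
  by change ((- (m%:R)) * (wc c y * psi c y ^+ m * P.[y]) + psi c y ^+ m * P^`().[y] = F1 m c P y); rewrite /F1; ring.
rewrite /Vt /GRing.scale /=.
change ((wc c * (fun y : R => psi c y ^+ m)) 0) with (wc c 0 * psi c 0 ^+ m).
rewrite psi0 wc0 expr1n; ring.
Qed.

Lemma sum_second n (C : 'I_n -> R) (M : 'I_n -> nat) c (P : 'I_n -> {poly R}) :
  c ^+ 2 <= 1 ->
  derive1 (derive1 (fun r => \sum_(k < n) C k * (psi c r ^+ M k * (P k).[r]))) 0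
  = \sum_(k < n) C k * Vt (M k) c (P k).
Proof.
move=> hc.
rewrite (@derive1_near _ _ (fun r => \sum_(k < n) C k * F1 (M k) c (P k) r) 0 1) ?ltr01 //.
  have h := is_derive_sum (fun k => is_deriveZ (C k) (T2 (M k) (P k) hc)).
  rewrite derive1E; apply: derive_val.
  apply: is_derive_fext h => y; by rewrite fct_sumE.
move=> r; rewrite subr0 ltr_norml => hr.
have h := is_derive_sum (fun k => is_deriveZ (C k) (T1 (M k) (P k) hc hr)).
rewrite derive1E; apply: derive_val.
apply: is_derive_fext h => y; by rewrite fct_sumE.
Qed.

End A3.

Section A4.
Variable R : realType.
Variable d : nat.
Implicit Types (xi x : 'rV[R]_d).

Lemma sqnormE x : sqnorm x = \sum_(j < d) x ord0 j ^+ 2.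
Proof. by []. Qed.

Lemma sqnorm_dir xi (i : 'I_d) r : on_sphere d xi ->
  sqnorm (r *: evec R i + xi) = (SqP (xi ord0 i)).[r].
Proof.
rewrite /on_sphere !sqnormE (bigD1 i) //= => h.
rewrite (bigD1 i) //= !mxE !eqxx /= mulr1 Sq_eval.
have -> : \sum_(j < d | j != i) (r *: evec R i + xi) ord0 j ^+ 2 = 1 - xi ord0 i ^+ 2.
  rewrite -h addrAC subrr add0r; apply: eq_bigr => j /negbTE hj.
  by rewrite !mxE /= hj mulr0 add0r.
ring.
Qed.

Lemma coord_sq_le1 xi (i : 'I_d) : on_sphere d xi -> xi ord0 i ^+ 2 <= 1.
Proof.
rewrite /on_sphere sqnormE (bigD1 i) //= => h.
rewrite -h lerDl; apply: sumr_ge0 => j _; exact: sqr_ge0.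
Qed.

Lemma on_sphere_normalize x : 0 < sqnorm x -> on_sphere d ((enorm x)^-1 *: x).
Proof.
move=> hx; rewrite /on_sphere sqnormE.
under eq_bigr => j _ do rewrite mxE exprMn.
rewrite -mulr_sumr -sqnormE /enorm exprVn sqr_sqrtr ?ltW // mulVf //.
by rewrite gt_eqF.
Qed.

Lemma harm_data m Y xi : harmH d m Y ->
  exists P : 'I_d -> {poly R},
   [/\ forall i r, Y (r *: evec R i + xi) = (P i).[r],
       \sum_(i < d) xi ord0 i * (P i)^`().[0] = m%:R * Y xi &
       \sum_(i < d) (P i)^`()^`().[0] = 0].
Proof.
case=> [[c hY] hL]; exists (Pyi c xi); split.
- by move=> i r; exact: Pyi_eval.
- exact: euler.
- by rewrite -(laplacian_Pyi xi hY) hL.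
Qed.

Lemma LB_main n (C : nat -> R) (Y : nat -> 'rV[R]_d -> R) (g : 'rV[R]_d -> R) xi :
  (forall m, (m <= n)%N -> harmH d m (Y m)) -> on_sphere d xi ->
  (forall y, on_sphere d y -> g y = \sum_(m < n.+1) C m * Y m y) ->
  laplaceBeltrami d g xi =
    \sum_(m < n.+1) C m * (- (m%:R * (m%:R + d%:R - 2))) * Y m xi.
Proof.
move=> hY hxi hg.
have /choice [P hP] : forall m : 'I_n.+1, exists P : 'I_d -> {poly R},
   [/\ forall i r, Y m (r *: evec R i + xi) = (P i).[r],
       \sum_(i < d) xi ord0 i * (P i)^`().[0] = (m : nat)%:R * Y m xi &
       \sum_(i < d) (P i)^`()^`().[0] = 0].
  move=> m; apply: harm_data; apply: hY; rewrite -ltnS; exact: ltn_ord.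
rewrite /laplaceBeltrami laplacian_dir.
transitivity (\sum_(i < d) \sum_(m < n.+1) C m * Vt m (xi ord0 i) (P m i)).
  apply: eq_bigr => i _.
  have hc := coord_sq_le1 i hxi.
  rewrite (@derive2_near _ _ (fun r => \sum_(m < n.+1) C m * (psi (xi ord0 i) r ^+ m * (P m i).[r])) 0 1 ltr01).
    exact: (sum_second (fun m : 'I_n.+1 => C m) (fun m : 'I_n.+1 => (m : nat)) (fun m => P m i) hc).
  move=> r; rewrite subr0 ltr_norml => hr.
  have hS := sqnorm_dir i r hxi.
  have hS0 : 0 < sqnorm (r *: evec R i + xi) by rewrite hS; exact: Sq_gt0.
  rewrite hg; last exact: on_sphere_normalize.
  apply: eq_bigr => m _; congr (_ * _).
  have [hm1 _ _] := hP m.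
  rewrite (homogE (proj1 (hY m _))); last by rewrite -ltnS; exact: ltn_ord.
  by rewrite hm1 /enorm hS /psi.
rewrite exchange_big /=; apply: eq_bigr => m _.
have [hm1 hm2 hm3] := hP m.
have hP0 : forall i, (P m i).[0] = Y m xi.
  by move=> i; rewrite -hm1 scale0r add0r.
rewrite -mulr_sumr -mulrA; congr (_ * _).
rewrite /Vt.
under eq_bigr => i _ do rewrite hP0.
rewrite !big_split /= -!mulr_suml.
have -> : \sum_(i < d) 2 * (- (m : nat)%:R * xi ord0 i) * (P m i)^`().[0]
   = - (2 * (m : nat)%:R) * \sum_(i < d) xi ord0 i * (P m i)^`().[0].
  by rewrite mulr_sumr; apply: eq_bigr => i _; ring.
rewrite hm2 hm3.
have -> : \sum_(i < d) ((m : nat)%:R * ((m : nat)%:R + 2) * xi ord0 i ^+ 2 - (m : nat)%:R)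
   = (m : nat)%:R * ((m : nat)%:R + 2) * \sum_(i < d) xi ord0 i ^+ 2 - (m : nat)%:R * d%:R.
  rewrite sumrB -mulr_sumr sumr_const card_ord; congr (_ - _).
  by rewrite mulr_natr.
rewrite -sqnormE hxi; ring.
Qed.

End A4.

Section M1.
Variable R : realType.

Lemma poch_gt0 (a : R) k : 0 < a -> 0 < poch a k.
Proof. by move=> a0; apply: prodr_gt0 => i _; have : (0:R) <= i%:R by []; lra. Qed.

Lemma cJ_neq0 (al : R) k : 0 <= al -> cJ al k != 0.
Proof.
move=> al0; rewrite /cJ /jacobiA.
have hk : (0:R) <= k%:R by [].
have hp : 0 < poch (k%:R + (al + 1) + 0 + 1) k by apply: poch_gt0; lra.
rewrite !mulf_neq0 ?invr_neq0 ?expf_neq0 ?pnatr_eq0 //; exact: lt0r_neq0.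
Qed.

Definition Gpoly (al : R) (K : nat) : {poly R} :=
  if K is k.+1 then cJ al k *: hP al k else 1.

Lemma jacobiJ_G al K t : 0 <= al -> 0 <= t <= 1 ->
  jacobiJ al K (1 - 2 * t) = (Gpoly al K).[t].
Proof.
case: K => [|k] h1 h2; first by rewrite /= -polyC1 hornerC.
by rewrite jacobiJ_hP // /Gpoly /= hornerZ.
Qed.

Lemma Phi_G al K : PhiP al K%:R (Gpoly al K) = 0.
Proof.
case: K => [|k] /=.
  by rewrite /PhiP deriv1P deriv0 !mulr0 scaler0 mul0r scale0r !addr0.
transitivity ((cJ al k)%:P * PhiP al k.+1%:R (hP al k)); last by rewrite Phi_hP mulr0.
by rewrite /PhiP !derivZ -!mul_polyC; ring.
Qed.

Lemma deriv_sumZ N (a : 'I_N -> R) (P : 'I_N -> {poly R}) :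
  (\sum_(m < N) a m *: P m)^`() = \sum_(m < N) a m *: (P m)^`().
Proof.
rewrite raddf_sum; apply: eq_bigr => m _; exact: derivZ.
Qed.

Lemma part1 d n (hd : (2 <= d)%N) (Z : R -> 'rV[R]_d -> R) :
  Vmm d n Z -> forall (t : R) xi, 0 < t < 1 -> on_sphere d xi ->
  Dop d (-1) Z t xi = - (n%:R * (n%:R + d%:R - 2)) * Z t xi.
Proof.
case=> Y [hY hZ] t xi /andP[t0 t1] hxi.
pose al := fun m : nat => ((2 * m + d)%:R - 2 : R).
have al0 : forall m, 0 <= al m.
  by move=> m; rewrite /al subr_ge0 ler_nat; lia.
pose Pm := fun m : nat => 'X^m * Gpoly (al m) (n - m).
pose Ptot := \sum_(m < n.+1) Y m xi *: Pm m.
have hYm : forall m : 'I_n.+1, harmH d m (Y m).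
  by move=> m; apply: hY; rewrite -ltnS.
have hZs : forall s, 0 <= s <= 1 -> Z s xi = Ptot.[s].
  move=> s hs; rewrite hZ // horner_sum; apply: eq_bigr => m _.
  rewrite hornerZ hornerM hornerXn -jacobiJ_G // (homogE (proj1 (hYm m))); ring.
have e0 : 0 < Num.min t (1 - t) by rewrite lt_min t0 subr_gt0.
have hnear : forall s, `|s - t| < Num.min t (1 - t) -> Z s xi = Ptot.[s].
  move=> s; rewrite lt_min !ltr_norml => /andP[] /andP[h1 h2] /andP[h3 h4].
  by apply: hZs; apply/andP; split; lra.
rewrite /Dop (derive2_near (g := horner Ptot) e0 hnear) (derive1_near (g := horner Ptot) e0 hnear).
rewrite -!derivE.
rewrite (@LB_main R d n (fun m => jacobiJ (al m) (n - m) (1 - 2 * t) * t ^+ m) Y); first last.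
- move=> y hy; rewrite hZ //; last by apply/andP; split; lra.
  apply: eq_bigr => m _; rewrite (homogE (proj1 (hYm m))); ring.
- exact: hxi.
- exact: hY.
rewrite hZs; last by apply/andP; split; lra.
rewrite /Ptot !deriv_sumZ !horner_sum.
have key : forall m : 'I_n.+1,
   t * (1 - t) * (Pm m)^`()^`().[t] + (d%:R - 1) * (1 - t) * (Pm m)^`().[t]
     + n%:R * (n%:R + d%:R - 2) * (Pm m).[t]
   = t^-1 * ((m : nat)%:R * ((m : nat)%:R + d%:R - 2) * (Pm m).[t]).
  move=> m.
  have E := EP_term d%:R m (n - m) (Gpoly (al m) (n - m)).
  have hal : 2 * (m : nat)%:R + d%:R - 2 = al m by rewrite /al natrD natrM.
  rewrite hal Phi_G mulr0 -natrD subnKC in E; last by rewrite -ltnS.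
  have := congr1 (fun p => p.[t]) E.
  rewrite /= hornerD hornerN hornerM hornerX hornerZ /EP !hornerD !hornerZ !hornerM.
  rewrite hornerD hornerN hornerX -polyC1 hornerC horner0 -/(Pm m) => H.
  have tn0 : t != 0 by rewrite gt_eqF.
  apply: (mulfI tn0); rewrite [RHS]mulrA mulfV // mul1r.
  by apply/eqP; rewrite -subr_eq0 -H; apply/eqP; ring.
have hC : forall m : 'I_n.+1, jacobiJ (al m) (n - m) (1 - 2 * t) * t ^+ m = (Pm m).[t].
  move=> m; rewrite hornerM hornerXn -jacobiJ_G //; first by rewrite mulrC.
  by apply/andP; split; lra.
under [in RHS]eq_bigr => m _ do rewrite hornerZ.
rewrite !mulr_sumr -!big_split /=; apply: eq_bigr => m _.
rewrite !hornerZ hC.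
have Km := key m.
apply/eqP; rewrite -subr_eq0; apply/eqP.
transitivity (Y m xi * ((t * (1 - t) * (Pm m)^`()^`().[t] + (d%:R - 1) * (1 - t) * (Pm m)^`().[t]
     + n%:R * (n%:R + d%:R - 2) * (Pm m).[t]) - t^-1 * ((m : nat)%:R * ((m : nat)%:R + d%:R - 2) * (Pm m).[t])));
  last by rewrite Km subrr mulr0.
ring.
Qed.

End M1.

Section M2.
Variable R : realType.

Lemma al_ge0 d m : (2 <= d)%N -> (0 : R) <= (2 * m + d)%:R - 2.
Proof. by move=> hd; rewrite subr_ge0 ler_nat; lia. Qed.

Lemma Jsplit d n' m (t : R) : (2 <= d)%N -> (m <= n')%N -> 0 <= t <= 1 ->
  jacobiJ ((2 * m + d)%:R - 2) (n'.+1 - m) (1 - 2 * t)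
  = cJ ((2 * m + d)%:R - 2) (n' - m) *
     ((1 - t) * jacobiP ((2 * m + d)%:R - 2) 1 (n' - m) (1 - 2 * t)).
Proof.
move=> hd hm ht; rewrite subSn // jacobiJ_hP //; last exact: al_ge0.
rewrite /hP hornerM hornerD hornerN hornerX -polyC1 hornerC jacobiP_horner /rP.
by have -> : (1 - (1 - 2 * t)) / 2 = t by field.
Qed.

Lemma part3 d n (W : R -> 'rV[R]_d -> R) :
  Hcone d n W -> second_summand d n W -> cone_eq d W (fun _ _ => 0).
Proof.
case=> Y [hY hW]; case: n hY hW => [|n'] hY hW //=.
case=> Q [_ hQ] t xi ht hxi.
have h01 : 0 <= (1:R) <= (1:R) by rewrite ler01 lexx.
have Y0 : Y xi = 0.
  by have := hW 1 xi h01 hxi; rewrite hQ // subrr mul0r scale1r.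
by rewrite hW // (homogE (proj1 hY)) Y0 mulr0.
Qed.

Lemma part2 d n (hd : (2 <= d)%N) (Z : R -> 'rV[R]_d -> R) :
  Vmm d n Z <->
      exists W1 W2, Hcone d n W1 /\ second_summand d n W2 /\
        cone_eq d Z (fun t xi => W1 t xi + W2 t xi).
Proof.
split.
- case=> Y [hY hZ]; case: n hY hZ => [|n'] hY hZ.
    exists (fun t xi => Y 0%N (t *: xi)), (fun _ _ => 0); split; last split.
    + by exists (Y 0%N); split => //; apply: hY.
    + by [].
    + by move=> t xi ht hxi; rewrite hZ // big_ord1 /= mul1r addr0.
  pose Q := fun (t : R) (xi : 'rV[R]_d) => \sum_(m < n'.+1)
     jacobiP ((2 * m + d)%:R - 2) 1 (n' - m) (1 - 2 * t) *
       (cJ ((2 * m + d)%:R - 2) (n' - m) * Y m (t *: xi)).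
  exists (fun t xi => Y n'.+1 (t *: xi)), (fun t xi => (1 - t) * Q t xi); split; last split.
  + by exists (Y n'.+1); split => //; apply: hY.
  + exists Q; split => //.
    exists (fun m x => cJ ((2 * m + d)%:R - 2) (n' - m) * Y m x); split => //.
    by move=> m hm; apply: harmH_scale; apply: hY; lia.
  + move=> t xi ht hxi; rewrite hZ // big_ord_recr /= subnn mul1r addrC; congr (_ + _).
    rewrite /Q mulr_sumr; apply: eq_bigr => m _.
    by rewrite Jsplit //; [ring | rewrite -ltnS].
- case=> W1 [W2 [[Y0 [hY0 hW1]] [hW2 hZ]]].
  case: n hY0 hW1 hW2 hZ => [|n'] hY0 hW1 hW2 hZ.
    exists (fun _ => Y0); split.
      by move=> m; rewrite leqn0 => /eqP ->.
    by move=> t xi ht hxi; rewrite hZ // hW1 // hW2 // big_ord1 /= mul1r addr0.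
  case: hW2 => Q [[Y' [hY' hQ]] hW2].
  exists (fun m => if m == n'.+1 then Y0
                   else (fun x => (cJ ((2 * m + d)%:R - 2) (n' - m))^-1 * Y' m x)).
  split.
    move=> m hm; case: eqP => [-> //|ne].
    by apply: harmH_scale; apply: hY'; lia.
  move=> t xi ht hxi.
  rewrite hZ // hW1 // hW2 // hQ // [in RHS]big_ord_recr /= ?eqxx subnn.
  rewrite (_ : jacobiJ _ 0 _ = 1) // mul1r.
  rewrite [in RHS]addrC; congr (_ + _); rewrite mulr_sumr; apply: eq_bigr => m _.
  have hm : (m <= n')%N by rewrite -ltnS.
  rewrite ifN_eq; last by rewrite neq_ltn ltnS hm.
  rewrite Jsplit //.
  have := cJ_neq0 (n' - m) (al_ge0 m hd).
  set c := cJ _ _ => hc.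
  by field.
Qed.

End M2.

Unset Implicit Arguments.

Theorem mainTheorem9 (R : realType) (d n : nat) (hd : (2 <= d)%N) :
  (forall Z : R -> 'rV[R]_d -> R, Vmm d n Z ->
     forall (t : R) xi, 0 < t < 1 -> on_sphere d xi ->
       Dop d (-1) Z t xi = - (n%:R * (n%:R + d%:R - 2)) * Z t xi)
  /\
  ((forall Z : R -> 'rV[R]_d -> R, Vmm d n Z <->
      exists W1 W2, Hcone d n W1 /\ second_summand d n W2 /\
        cone_eq d Z (fun t xi => W1 t xi + W2 t xi))
   /\
   (forall W : R -> 'rV[R]_d -> R, Hcone d n W -> second_summand d n W -> cone_eq d W (fun _ _ => 0))).
Proof.
split; first exact: part1.
split; first by move=> Z; exact: part2.
exact: part3.
Qed.
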